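(* Let $G$ be a finite abelian group and let $\rho\ge4$ be an integer. Then $s_\rho(G)\le\frac{2}{\rho+1}|G|$, with equality if and only if $G$ has a subgroup $H$ such that $G/H$ is cyclic of order $\rho+1$. Moreover, for a subset $A\subseteq G$ the following are equivalent: (i) $A$ is a generating set for $G$ with $\operatorname{diam}^+_A(G)\ge\rho$ and $|A|=\frac{2}{\rho+1}|G|$; (ii) $A=H\cup(g+H)$, where $H$ is a subgroup of $G$ such that $G/H$ is cyclic of order $\rho+1$, and $g\in G$ is such that $g+H$ generates $G/H$.
   Context: Groups are written additively. For $A\subseteq G$ let $A_0:=A\cup\{0\}$ and $\langle A\rangle^+_\rho:=\rho A_0=\{a_1+\dots+a_\rho:a_i\in A_0\}$. $\operatorname{diam}^+_A(G):=\min\{\rho\in\mathbb{N}_0:\langle A\rangle^+_\rho=G\}$ ($\min\varnothing=\infty$). With the convention $\max\varnothing=0$: $s_\rho(G):=\max\{|A|: A\subseteq G,\ \rho\le\operatorname{diam}^+_A(G)<\infty\}$. *)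

(* Defs.v *)
(* The finite abelian group G is a {group gT} with [abelian G];
   the paper's additive notation becomes multiplicative (0 ~ 1, a+b ~ a*b). *)
From mathcomp Require Import all_boot all_order all_fingroup all_solvable.
From Stdlib Require Import ClassicalEpsilon.
Set Implicit Arguments. Unset Strict Implicit. Unset Printing Implicit Defensive.
Local Open Scope group_scope.

Definition A0 (gT : finGroupType) (A : {set gT}) : {set gT} := 1 |: A.

Fixpoint sumset (gT : finGroupType) (rho : nat) (A : {set gT}) : {set gT} :=
  match rho with
  | 0 => [set 1]
  | r.+1 => sumset r A * A0 A
  end.

(* rho <= diam^+_A(G) < oo  (diam = min of the set of r with rA_0 = G) *)
Definition diam_ge_fin (gT : finGroupType) (G : {set gT}) (A : {set gT}) (rho : nat) : Prop :=
  (exists r, sumset r A = G) /\ (forall r, sumset r A = G -> rho <= r).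

Definition pbool (P : Prop) : bool :=
  if excluded_middle_informative P then true else false.

(* s_rho(G) := max { |A| : A ⊆ G, rho <= diam^+_A(G) < oo }, max ∅ = 0 *)
Definition s_rho (gT : finGroupType) (G : {set gT}) (rho : nat) : nat :=
  \max_(A : {set gT} | (A \subset G) && pbool (diam_ge_fin G A rho)) #|A|.

(* Main.v *)
Require Import Defs.
From mathcomp Require Import all_boot all_order all_fingroup all_solvable.
From Stdlib Require Import Lia ClassicalEpsilon.
Set Implicit Arguments. Unset Strict Implicit. Unset Printing Implicit Defensive.
Local Open Scope group_scope.

Ltac slia := intros; repeat match goal with
 | H : is_true (leq _ _) |- _ => apply (elimT leP) in H
 | H : is_true (_ == _) |- _ => apply (elimT eqP) in H
 end; try match goal with |- is_true (leq _ _) => apply/leP | |- is_true (_ == _) => apply/eqP end; repeat rewrite <- plusE in *; repeat rewrite <- minusE in *; repeat rewrite <- multE in *; lia.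

Ltac setcards := repeat match goal with |- context [ @card ?T ?A ] =>
  let c := fresh "c" in set c := @card T A end.
Ltac clia := setcards; intros; slia.

Lemma test (a b c : nat) : a <= b -> b + c <= 3 -> a + c < 4.
Proof. intros; slia. Qed.

Lemma lcoset_mulA (gT : finGroupType) (x : gT) (X B : {set gT}) :
  (x *: X) * B = x *: (X * B).
Proof.
apply/eqP; rewrite eqEsubset; apply/andP; split; apply/subsetP => y.
- case/mulsgP => z b /lcosetP[w wX ->] bB ->. rewrite -mulgA.
  apply/lcosetP; exists (w * b) => //; exact: mem_mulg.
- case/lcosetP => w /mulsgP[z b zX bB ->] ->. rewrite mulgA.
  apply: mem_mulg => //. apply/lcosetP; by exists z.
Qed.

Lemma commGsets (gT : finGroupType) (G : {group gT}) (X Y : {set gT}) :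
  abelian G -> X \subset G -> Y \subset G -> X * Y = Y * X.
Proof.
move=> cGG sXG sYG; apply: centC. apply: subset_trans sXG _.
apply: subset_trans cGG _. exact: centS.
Qed.

Lemma commGel (gT : finGroupType) (G : {group gT}) (x y : gT) :
  abelian G -> x \in G -> y \in G -> x * y = y * x.
Proof. by move=> /centsP cG xG yG; exact: esym (cG y yG x xG). Qed.

Section Atom.
Variables (gT : finGroupType) (G : {group gT}) (B : {set gT}).
Hypotheses (cGG : abelian G) (sBG : B \subset G) (B1 : 1 \in B) (BnG : B != G).

Definition fok (X : {set gT}) := [&& X \subset G, X != set0 & X * B != G].
Definition bnd (X : {set gT}) := #|X * B| - #|X|.

Lemma leq_bnd (X : {set gT}) : #|X| <= #|X * B|.
Proof. exact: subset_leq_card (mulg_subl _ B1). Qed.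

Lemma fok_lcoset (x : gT) (X : {set gT}) : x \in G -> fok X -> fok (x *: X) /\ bnd (x *: X) = bnd X.
Proof.
move=> xG /and3P[sXG nX0 XBG]; rewrite /bnd lcoset_mulA !card_lcoset; split=> //.
apply/and3P; split.
- by rewrite -(lcoset_id xG) lcosetS.
- by rewrite -card_gt0 card_lcoset card_gt0.
- apply: contra XBG => /eqP e.
  have -> : X * B = x^-1 *: (x *: (X * B)) by rewrite -lcosetM mulVg lcoset1.
  by rewrite -lcoset_mulA e lcoset_id ?groupV.
Qed.

Lemma atom_main : exists H : {group gT},
  [/\ H \subset G, H * B != G & forall X, fok X -> #|H * B| - #|H| <= bnd X].
Proof.
have f1 : fok [set 1].
  rewrite /fok sub1set group1 -set1gE mul1g BnG andbT.
  by apply/set0Pn; exists 1; rewrite set11.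
have kex : exists k, [exists X, fok X && (bnd X == k)].
  by exists (bnd [set 1]); apply/existsP; exists [set 1]; rewrite f1 eqxx.
case: (ex_minnP kex) => k /existsP[X0 /andP[fX0 /eqP bX0]] kmin.
have kminX X : fok X -> k <= bnd X.
  by move=> fX; apply: kmin; apply/existsP; exists X; rewrite fX eqxx.
have aex : exists a, [exists X, [&& fok X, bnd X == k & #|X| == a]].
  by exists #|X0|; apply/existsP; exists X0; rewrite fX0 bX0 !eqxx.
case: (ex_minnP aex) => a /existsP[X1 /and3P[fX1 /eqP bX1 /eqP cX1]] amin.
have aminX X : fok X -> bnd X = k -> a <= #|X|.
  by move=> fX bX; apply: amin; apply/existsP; exists X; rewrite fX bX !eqxx.
have kb : k < #|B|.
  have := kminX _ f1; rewrite /bnd -set1gE mul1g cards1.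
  have : 0 < #|B| by rewrite card_gt0; apply/set0Pn; exists 1.
  move=> h1 h2; move: h1 h2; set nB := #|B|; move=> h1 h2; slia.
have cardXB X : fok X -> bnd X = k -> #|X * B| = #|X| + k.
  move=> _ <-; rewrite /bnd subnKC //; exact: leq_bnd.
have key : forall X Y, fok X -> bnd X = k -> #|X| = a ->
                       fok Y -> bnd Y = k -> #|Y| = a -> X :&: Y != set0 -> X = Y.
  move=> X Y fX bX cX fY bY cY nXY.
  have XBc := cardXB _ fX bX; have YBc := cardXB _ fY bY.
  case/and3P: (fX) => sXG nX0 XBG; case/and3P: (fY) => sYG nY0 YBG.
  have nUG : (X :|: Y) * B != G.
    apply/negP => /eqP eUG.
    case/set0Pn: nXY => z zXY.
    have h1 : #|B| <= #|X * B :&: Y * B|.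
      rewrite -(card_lcoset B z); apply: subset_leq_card; apply/subsetP => w.
      case/lcosetP => b bB ->; move/setIP: zXY => [zX zY].
      by rewrite inE !mem_mulg.
    have h2 := cardsUI (X * B) (Y * B); rewrite -mulUg eUG in h2.
    pose Ys := (G :\: X * B)^-1.
    have sYsG : Ys \subset G.
      apply/subsetP => y; rewrite inE => /setDP[yG _]; by rewrite -groupV.
    have cYs : #|Ys| = #|G| - #|X * B|.
      by rewrite card_invg cardsDS // mul_subG.
    have YsB : Ys * B \subset G :\: X^-1.
      apply/subsetP => w /mulsgP[y b]; rewrite inE => /setDP[yG yXB] bB ->.
      have bG : b \in G := subsetP sBG b bB.
      rewrite inE (groupM (groupVl yG) bG) andbT.
      apply: contra yXB; rewrite inE invMg => bix.
      have xG : b^-1 * y^-1 \in G := groupM (groupVr bG) yG.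
      have -> : y^-1 = (b^-1 * y^-1) * b.
        by rewrite (commGel cGG xG bG) mulKVg.
      exact: mem_mulg.
    have cYsB : #|Ys * B| <= #|G| - #|X|.
      apply: leq_trans (subset_leq_card YsB) _.
      by rewrite cardsDS ?card_invg // -invGid invSg.
    have X0pos : 0 < #|X| by rewrite card_gt0.
    have XBG' : #|X * B| < #|G|.
      rewrite ltn_neqAle; rewrite (subset_leq_card (mul_subG sXG sBG)) andbT.
      apply: contra XBG => e; rewrite eqEcard mul_subG //=.
      by rewrite (eqP e).
    have fYs : fok Ys.
      apply/and3P; split=> //.
        by rewrite -card_gt0 cYs subn_gt0.
      apply/negP => /eqP e; move: cYsB; rewrite e; clia.
    have bYs : bnd Ys = k.
      apply/eqP; rewrite eqn_leq kminX // andbT /bnd cYs.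
      move: cYsB XBG' (leq_bnd Ys); rewrite XBc cX; clia.
    have := aminX _ fYs bYs; rewrite cYs XBc cX; move: h1 h2 kb.
    rewrite XBc YBc cX cY; clia.
  have sIG : X :&: Y \subset G by apply: subset_trans (subsetIl _ _) sXG.
  have fI : fok (X :&: Y).
    apply/and3P; split=> //; apply: contra XBG => /eqP e.
    by rewrite eqEsubset mul_subG //= -{1}e mulSg // subsetIl.
  have fU : fok (X :|: Y).
    apply/and3P; split=> //; first by rewrite subUset sXG.
    by apply: contra nX0 => /eqP e; rewrite -subset0 -e subsetUl.
  have h3 := cardsUI (X * B) (Y * B); rewrite -mulUg in h3.
  have h4 : #|(X :&: Y) * B| <= #|X * B :&: Y * B|.
    by apply: subset_leq_card; rewrite subsetI !mulSg ?subsetIl ?subsetIr.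
  have h5 := cardsUI X Y.
  have kU := kminX _ fU; have kI := kminX _ fI.
  have lU := leq_bnd (X :|: Y); have lI := leq_bnd (X :&: Y).
  have bI : bnd (X :&: Y) = k.
    apply/eqP; rewrite eqn_leq kI andbT; move: kU lU lI h3 h4 h5.
    rewrite /bnd XBc YBc cX cY; clia.
  have aI := aminX _ fI bI.
  have eX : X :&: Y = X.
    apply/eqP; rewrite eqEcard subsetIl /=; by rewrite cX.
  have eY : X :&: Y = Y.
    apply/eqP; rewrite eqEcard subsetIr /=; by rewrite cY.
  by rewrite -eX eY.
case/and3P: (fX1) => sX1G nX10 _.
case/set0Pn: nX10 => x xX1.
have xG : x \in G := subsetP sX1G x xX1.
pose H0 := x^-1 *: X1.
have [fH0 bH0] := fok_lcoset (groupVr xG) fX1.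
have cH0 : #|H0| = a by rewrite card_lcoset.
have H01 : 1 \in H0 by rewrite mem_lcoset invgK mulg1.
case/and3P: (fH0) => sH0G _ H0BG.
have stab h : h \in H0 -> h *: H0 = H0.
  move=> hH0; have hG : h \in G := subsetP sH0G h hH0.
  have [fh bh] := fok_lcoset hG fH0.
  apply: key => //; first by rewrite bh bH0.
  - by rewrite card_lcoset.
  - by rewrite bH0 bX1.
  apply/set0Pn; exists h; rewrite inE hH0 andbT mem_lcoset mulVg //.
have gH0 : group_set H0.
  apply/group_setP; split=> // h1 h2 h1H h2H.
  by rewrite -(stab h1 h1H) mem_lcoset mulKg.
exists (Group gH0); split=> //= X fX.
have -> : #|H0 * B| - #|H0| = k by rewrite -/(bnd H0) bH0 bX1.
exact: kminX.
Qed.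

End Atom.

Local Open Scope nat_scope.
Lemma arith1 (x h b n d : nat) : 3 <= d -> 2 * h <= x -> b <= x -> 2 * b + (d - 3) * (x - h) <= n -> d.+1 * b <= 2 * n.
Proof.
move=> d3 h2 bx.
have xh : x = (x - h) + h by rewrite subnK // (leq_trans _ h2) // leq_pmull.
have dd : d = (d - 3) + 3 by rewrite subnK.
move: (x - h) xh => y xh; move: (d - 3) dd => e dd; subst x d.
move=> hn.
have e1 : b <= 2 * y by slia.
have := leq_mul (leqnn e) e1. slia.
Qed.
Lemma arith2 (x h b n d : nat) : 4 <= d -> 2 * h <= x -> b <= x -> 2 * b + (d - 3) * (x - h) <= n -> d.+1 * b = 2 * n -> x = b /\ x = 2 * h.
Proof.
move=> d4 h2 bx.
have xh : x = (x - h) + h by rewrite subnK // (leq_trans _ h2) // leq_pmull.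
have dd : d = (d - 3) + 3 by rewrite subnK // ltnW.
have e0 : 0 < d - 3 by rewrite subn_gt0.
move: (x - h) xh => y xh; move: (d - 3) dd e0 => e dd e0; subst x d.
move=> hn Heq.
have e1 : 2 * y <= b.
  have : e * (2 * y) <= e * b. slia.
  by rewrite leq_mul2l eqn0Ngt e0.
split; slia.
Qed.
Local Open Scope group_scope.

Section Main.
Variables (gT : finGroupType) (G : {group gT}) (A : {set gT}).
Hypotheses (cGG : abelian G) (sAG : A \subset G).

Local Notation B := (A0 A).
Local Notation S r := (sumset r A).

Lemma B1 : 1 \in B. Proof. by rewrite /A0 setU11. Qed.
Lemma sBG : B \subset G. Proof. by rewrite /A0 subUset sub1set group1. Qed.
Lemma sumset1 : S 1 = B. Proof. by rewrite /= -set1gE mul1g. Qed.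
Lemma sumset_sub r : S r \subset G.
Proof. elim: r => [|r IH] /=; first by rewrite sub1set group1. exact: mul_subG IH sBG. Qed.
Lemma sumset_1 r : 1 \in S r.
Proof. elim: r => [|r IH] /=; first by rewrite set11. by rewrite -(mulg1 1) mem_mulg // B1. Qed.
Lemma sumset_mono r s : r <= s -> S r \subset S s.
Proof.
move/subnKC <-; elim: (s - r) => [|m IH]; first by rewrite addn0.
rewrite addnS /=; apply: subset_trans IH _; exact: mulg_subl B1.
Qed.
Lemma sumset_gen r : S r \subset <<A>>.
Proof.
elim: r => [|r IH] /=; first by rewrite sub1set group1.
rewrite -(mulGid <<A>>%G) mulgSS //= /A0 subUset sub1set group1; exact: subset_gen.
Qed.

Lemma main_bound d : 3 <= d -> S d = G -> (forall r, S r = G -> d <= r) ->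
  exists H : {group gT}, [/\ H \subset G, 2 * #|H| <= #|H * B|, #|B| <= #|H * B|
    & 2 * #|B| + (d - 3) * (#|H * B| - #|H|) <= #|G| ].
Proof.
move=> d3 SdG dmin.
have SnG r : r < d -> S r != G.
  by move=> rd; apply/eqP => e; have := dmin _ e; rewrite leqNgt rd.
have BnG : B != G by rewrite -sumset1 SnG // (leq_trans _ d3).
have [H [sHG HBG Hmin]] := atom_main cGG sBG B1 BnG.
set k := #|H * B| - #|H|.
have grow j : 0 < j -> j.+1 < d -> #|S j| + k <= #|S j.+1|.
  move=> j0 jd.
  have fj : fok G B (S j).
    apply/and3P; split; first exact: sumset_sub.
      by apply/set0Pn; exists 1; exact: sumset_1.
    by have := SnG _ jd.
  have := Hmin _ fj; rewrite /bnd -/k /=.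
  have := leq_bnd B1 (S j); move: (S j * B) => T; clia.
have chain j : 0 < j -> j < d -> #|B| + (j.-1) * k <= #|S j|.
  elim: j => [//|j IH] _ jd.
  case: j IH jd => [|j] IH jd; first by rewrite sumset1 mul0n addn0.
  have := IH isT (ltnW jd); have := grow j.+1 isT jd; clia.
have pig : #|S (d - 2)| + #|B| <= #|G|.
  have [x xG xS] : exists2 x, x \in G & x \notin S (d - 2).+1.
    apply/exists_inP; rewrite -negb_forall_in; apply/negP => /forall_inP h.
    have : S (d - 2).+1 = G.
      by apply/eqP; rewrite eqEsubset sumset_sub; apply/subsetP.
    move=> e; have : (d - 2).+1 < d.
      by rewrite -subSn ?subSS ?ltn_subrL // (leq_trans _ d3).
    by move/SnG; rewrite e eqxx.
  set C := x *: B^-1.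
  have sCG : C \subset G.
    apply/subsetP => y /lcosetP[c cB ->]; apply: groupM xG _.
    move: cB; rewrite inE => cB; by rewrite -groupV (subsetP sBG _ cB).
  have dis : S (d - 2) :&: C = set0.
    apply/setP => y; rewrite inE [RHS]inE; apply/negP => /andP[yS /lcosetP[c cB e]].
    have xin : x \in S (d - 2) * B.
      rewrite (_ : x = y * c^-1); last by rewrite e mulgK.
      apply: mem_mulg yS _; by move: cB; rewrite inE.
    by move: xS; rewrite /= xin.
  have := cardsUI (S (d - 2)) C; rewrite dis cards0 addn0 card_lcoset card_invg => <-.
  by apply: subset_leq_card; rewrite subUset sumset_sub.
have nBH : ~~ (B \subset H).
  apply/negP => sBH.
  have SH r : S r \subset H.
    elim: r => [|r IH] /=; first by rewrite sub1set group1.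
    by rewrite -(mulGid H) mulgSS.
  have : H * B == G.
    rewrite eqEsubset mul_subG ?sBG //= -{1}SdG.
    exact: subset_trans (SH d) (mulg_subl _ B1).
  by rewrite (negbTE HBG).
case/subsetPn: nBH => b0 b0B b0H.
have HB2 : 2 * #|H| <= #|H * B|.
  have dis : H :&: H :* b0 = set0.
    apply/setP => y; rewrite inE [RHS]inE; apply/negP => /andP[yH /rcosetP[h hH e]].
    by move: b0H; rewrite (_ : b0 = h^-1 * y) ?groupM ?groupV // e mulKg.
  have := cardsUI H (H :* b0); rewrite dis cards0 addn0 card_rcoset addnn -mul2n => <-.
  apply: subset_leq_card; rewrite subUset mulg_subl ?B1 //=.
  by apply: mulgS; rewrite sub1set.
have HBB : #|B| <= #|H * B| by apply: subset_leq_card; apply: mulg_subr.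
exists H; split=> //.
have := chain (d - 2); rewrite -subn1 -subnDA.
have d2 : 0 < d - 2 by rewrite subn_gt0 (leq_trans _ d3).
have d2' : d - 2 < d by rewrite ltn_subrL (leq_trans _ d3).
move=> /(_ d2 d2'); move: pig; rewrite -/k; clia.
Qed.

End Main.

Lemma ii_to_i (gT : finGroupType) (G H : {group gT}) (g : gT) (rho : nat) :
  abelian G -> 0 < rho -> H \subset G -> #|G / H| = rho.+1 -> g \in G ->
  <[coset H g]> = G / H ->
  [/\ sumset rho (H :|: g *: H) = G, <<H :|: g *: H>> = G,
      forall r, sumset r (H :|: g *: H) = G -> rho <= r
    & (#|H :|: g *: H| * rho.+1 = 2 * #|G|)%N].
Proof.
move=> cGG r0 sHG cQ gG eQ.
set A := H :|: g *: H.
have nHG : G \subset 'N(H) := sub_abelian_norm cGG sHG.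
have gN : g \in 'N(H) := subsetP nHG g gG.
have sgHG : g *: H \subset G by rewrite -(lcoset_id gG) lcosetS.
have sAG : A \subset G by rewrite subUset sHG.
have nG : #|G| = (rho.+1 * #|H|)%N.
  by rewrite -(Lagrange sHG) -(card_quotient nHG) cQ mulnC.
have gH : g \notin H.
  apply/negP => gH; move: cQ; rewrite -eQ (coset_id gH) cycle1 cards1.
  by move=> e; move: r0; rewrite -ltnS -e.
have dis : H :&: g *: H = set0.
  apply/setP => y; rewrite inE [RHS]inE; apply/negP => /andP[yH /lcosetP[h hH e]].
  by move: gH; rewrite (_ : g = y * h^-1) ?groupM ?groupV // e mulgK.
have cA : #|A| = (2 * #|H|)%N.
  by have := cardsUI H (g *: H); rewrite dis cards0 addn0 card_lcoset addnn -mul2n.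
set c := coset H g.
have ordc : #[c] = rho.+1 by rewrite orderE eQ.
have gA : g \in A by rewrite inE lcoset_refl orbT.
have AB : A \subset A0 A by rewrite /A0 subsetUr.
have claim i : 0 < i -> forall x, x \in G -> coset H x = c ^+ i -> x \in sumset i A.
  elim: i => [//|i IH] _ x xG.
  have xN : x \in 'N(H) := subsetP nHG x xG.
  case: i IH => [|i] IH e.
    rewrite sumset1 (subsetP AB) // inE; apply/orP; right.
    rewrite mem_lcoset; apply: coset_idr; first by rewrite groupM ?groupV.
    by rewrite morphM ?groupV //= morphV //= e expg1 mulVg.
  have x'G : x * g^-1 \in G by rewrite groupM ?groupV.
  have := IH isT _ x'G; rewrite morphM ?groupV //= morphV //= e expgSr mulgK.
  move=> /(_ erefl) x'S.
  have -> : x = x * g^-1 * g by rewrite mulgKV.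
  by apply: mem_mulg x'S _; rewrite (subsetP AB).
have SG : sumset rho A = G.
  apply/eqP; rewrite eqEsubset sumset_sub //=; apply/subsetP => x xG.
  have : coset H x \in <[c]> by rewrite eQ mem_quotient.
  case/cyclePmin => i; rewrite ordc => ilt e.
  case: i ilt e => [|i] ilt e.
    have xH : x \in H by apply: coset_idr; [exact: subsetP nHG x xG | by rewrite e].
    have := sumset_mono A r0; move/subsetP; apply.
    by rewrite sumset1 (subsetP AB) // inE xH.
  have := sumset_mono A (ilt : (i.+1 <= rho)%N); move/subsetP; apply; exact: claim.
split=> //.
- apply/eqP; rewrite eqEsubset gen_subG sAG /= -{1}SG; exact: sumset_gen.
- have SQ r : sumset r A \subset [set x in 'N(H) | [exists i : 'I_r.+1, coset H x == c ^+ i]].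
    elim: r => [|r IH] /=.
      apply/subsetP => x /set1P ->; rewrite inE group1 /=.
      by apply/existsP; exists ord0; rewrite morph1 expg0.
    apply/subsetP => y /mulsgP[x b xS bB ->].
    move: (subsetP IH x xS); rewrite inE => /andP[xN /existsP[i /eqP ei]].
    have bG : b \in G := subsetP (sBG sAG) b bB.
    have bN : b \in 'N(H) := subsetP nHG b bG.
    rewrite inE groupM //=; apply/existsP.
    move: bB; rewrite /A0 !inE => /orP[/eqP ->|/orP[bH|/lcosetP[h hH eb]]].
    + by exists (widen_ord (leqnSn _) i); rewrite mulg1 ei.
    + by exists (widen_ord (leqnSn _) i); rewrite coset_kerr // ei.
    + exists (lift ord0 i); rewrite eb mulgA coset_kerr // morphM //=.
      by rewrite ei /= /bump leq0n add1n expgSr.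
  move=> r SrG.
  have : G / H \subset [set c ^+ (val i) | i : 'I_r.+1].
    apply/subsetP => y /morphimP[x xN xG ->] /=.
    move: (subsetP (SQ r) x); rewrite SrG => /(_ xG); rewrite inE => /andP[_ /existsP[i /eqP ->]].
    by apply: imset_f.
  move/subset_leq_card; rewrite cQ => h.
  rewrite -ltnS; apply: leq_trans h _; apply: leq_trans (leq_imset_card _ _) _; by rewrite card_ord.
- by rewrite cA nG mulnCA mulnC.
Qed.

Lemma sumset_add (gT : finGroupType) (A : {set gT}) i j :
  sumset (i + j) A = sumset i A * sumset j A.
Proof.
elim: j => [|j IH]; first by rewrite addn0 /= -set1gE mulg1.
by rewrite addnS /= IH mulgA.
Qed.

Lemma lcoset_rcoset (gT : finGroupType) (G H : {group gT}) (g : gT) :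
  abelian G -> H \subset G -> g \in G -> g *: H = H :* g.
Proof.
move=> cGG sHG gG; apply/setP => y; apply/lcosetP/rcosetP => [[h hH ->]|[h hH ->]];
  exists h => //; apply: (commGel cGG) => //; exact: subsetP sHG h hH.
Qed.

Section Main2.
Variables (gT : finGroupType) (G : {group gT}) (A : {set gT}).
Hypotheses (cGG : abelian G) (sAG : A \subset G).
Local Notation B := (A0 A).
Local Notation S r := (sumset r A).

Lemma gen_finite : <<A>> = G -> exists r, S r = G.
Proof.
move=> genA.
have [r e] : exists r, S r.+1 = S r.
  case: (boolP [exists r : 'I_#|G|.+1, S r.+1 == S r]).
    by case/existsP => r /eqP e; exists r.
  move/existsPn => h.
  have grow r : r <= #|G| -> r < #|S r|.
    elim: r => [|r IH] rn; first by rewrite card_gt0; apply/set0Pn; exists 1; exact: sumset_1.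
    apply: leq_ltn_trans (IH (ltnW rn)) _; apply: proper_card.
    rewrite properEneq (sumset_mono A (leqnSn r)) andbT eq_sym.
    exact: (h (@Ordinal #|G|.+1 r (ltnW rn))).
  have := grow _ (leqnn _).
  by rewrite ltnNge subset_leq_card // sumset_sub.
have stab m : S (r + m) = S r.
  elim: m => [|m IH]; first by rewrite addn0.
  by rewrite addnS /= IH.
have gS : group_set (S r).
  apply/group_setP; split; first exact: sumset_1.
  by move=> x y xS yS; rewrite -(stab r) sumset_add mem_mulg.
have sAS : A \subset S r.
  rewrite -e; apply: subset_trans (sumset_mono A (ltn0Sn r)).
  by rewrite sumset1 /A0 subsetUr.
exists r; apply/eqP; rewrite eqEsubset sumset_sub //=.
rewrite -genA (gen_subG A (Group gS)); exact: sAS.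
Qed.

Lemma bound_d d : 3 <= d -> S d = G -> (forall r, S r = G -> d <= r) ->
  (d.+1 * #|B| <= 2 * #|G|)%N.
Proof.
move=> d3 SdG dmin.
have [H [_ h1 h2 h3]] := main_bound cGG sAG d3 SdG dmin.
exact: arith1 h1 h2 h3.
Qed.

Lemma eq_struct d : 4 <= d -> S d = G -> (forall r, S r = G -> d <= r) ->
  (d.+1 * #|B| = 2 * #|G|)%N ->
  exists (H : {group gT}) (g : gT), [/\ H \subset G, g \in G, B = H :|: g *: H,
     #|G| = (d.+1 * #|H|)%N & <[coset H g]> = G / H].
Proof.
move=> d4 SdG dmin eqd.
have d3 : 3 <= d by apply: ltnW.
have [H [sHG h1 h2 h3]] := main_bound cGG sAG d3 SdG dmin.
have [xb x2h] := arith2 d4 h1 h2 h3 eqd.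
have eB : H * B = B.
  apply/eqP; rewrite eq_sym eqEcard mulg_subr ?group1 //=.
  by rewrite xb.
have sHB : H \subset B by rewrite -eB mulg_subl // B1.
have hpos : 0 < #|H| := cardG_gt0 H.
have [g gB gH] : exists2 g, g \in B & g \notin H.
  apply/subsetPn; apply/negP => sBH.
  have := subset_leq_card sBH; rewrite -xb x2h; move: hpos; clia.
have gG : g \in G := subsetP (sBG sAG) g gB.
have egH : g *: H = H :* g := lcoset_rcoset cGG sHG gG.
have sgHB : g *: H \subset B.
  rewrite egH -eB; apply/subsetP => y /rcosetP[h hH ->]; exact: mem_mulg.
have dis : H :&: g *: H = set0.
  apply/setP => y; rewrite inE [RHS]inE; apply/negP => /andP[yH /lcosetP[h hH e]].
  by move: gH; rewrite (_ : g = y * h^-1) ?groupM ?groupV // e mulgK.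
have eB2 : B = H :|: g *: H.
  apply/eqP; rewrite eq_sym eqEcard subUset sHB sgHB /=.
  have := cardsUI H (g *: H); rewrite dis cards0 addn0 card_lcoset => ->.
  by rewrite -xb x2h addnn -mul2n.
have nG : #|G| = (d.+1 * #|H|)%N.
  move: eqd; rewrite -xb x2h; move=> *; slia.
exists H, g; split=> //.
have nHG : G \subset 'N(H) := sub_abelian_norm cGG sHG.
have gN : g \in 'N(H) := subsetP nHG g gG.
apply/eqP; rewrite eqEsubset cycle_subG mem_quotient //= -quotient_cycle //.
rewrite quotientSK //.
have cHg : commute H <[g]>.
  by apply: commGsets cGG sHG _; rewrite cycle_subG.
have gs : group_set (H * <[g]>) by apply/comm_group_setP.
pose K := Group gs.
have sBK : B \subset K.
  rewrite eB2 subUset /= mulg_subl ?group1 //= egH.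
  by apply/subsetP => y /rcosetP[h hH ->]; rewrite mem_mulg ?cycle_id.
have SK r : S r \subset K.
  elim: r => [|r IH]; first by rewrite /= sub1set (group1 K).
  apply: subset_trans (mulgSS IH sBK) _; by rewrite mulGid.
by rewrite -{1}SdG (SK d).
Qed.

Lemma i_to_ii rho : 4 <= rho -> <<A>> = G -> (forall r, S r = G -> rho <= r) ->
  (#|A| * rho.+1 = 2 * #|G|)%N ->
  exists (H : {group gT}) (g : gT),
    [/\ H \subset G, cyclic (G / H), #|G / H| = rho.+1,
        g \in G /\ <[coset H g]> = G / H & A = H :|: g *: H].
Proof.
move=> r4 genA rmin eqA.
have ex : exists r, S r == G by have [r e] := gen_finite genA; exists r; rewrite e.
case: (ex_minnP ex) => d /eqP SdG dmin'.
have dmin r : S r = G -> d <= r by move=> e; apply: dmin'; rewrite e.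
have rd : rho <= d := rmin _ SdG.
have d3 : 3 <= d by apply: leq_trans rd; apply: ltnW.
have bd := bound_d d3 SdG dmin.
have AB : A \subset B by rewrite /A0 subsetUr.
have cAB := subset_leq_card AB.
have m1 : (rho.+1 * #|B| <= d.+1 * #|B|)%N by rewrite leq_mul2r ltnS rd orbT.
have m2 : (rho.+1 * #|A| <= rho.+1 * #|B|)%N by rewrite leq_mul2l cAB orbT.
have eAB : #|A| = #|B|.
  apply/eqP; rewrite -(eqn_pmul2l (ltn0Sn rho)) eqn_leq m2 /=.
  by rewrite [X in _ <= X]mulnC eqA; apply: leq_trans m1 bd.
have bpos : 0 < #|B| by rewrite card_gt0; apply/set0Pn; exists 1; exact: B1.
have ed : d = rho.
  apply/eqP; rewrite -eqSS -(eqn_pmul2r bpos) eq_sym eqn_leq m1 /=.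
  by apply: leq_trans bd _; rewrite -eqA eAB mulnC.
subst d.
have eA : A = B by apply/eqP; rewrite eqEcard AB /= eAB.
have eqd : (rho.+1 * #|B| = 2 * #|G|)%N by rewrite -eAB mulnC.
have [H [g [sHG gG eB nG ecyc]]] := eq_struct r4 SdG dmin eqd.
have nHG : G \subset 'N(H) := sub_abelian_norm cGG sHG.
exists H, g; split=> //.
- by rewrite -ecyc cycle_cyclic.
- apply/eqP; rewrite -(eqn_pmul2l (cardG_gt0 H)) (card_quotient nHG) Lagrange //.
  by rewrite nG mulnC.
- by rewrite eA.
Qed.

End Main2.

Lemma pboolP (Q : Prop) : pbool Q -> Q.
Proof. by rewrite /pbool; case: excluded_middle_informative. Qed.
Lemma pboolT (Q : Prop) : Q -> pbool Q.
Proof. by rewrite /pbool; case: excluded_middle_informative. Qed.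

Lemma boundA (gT : finGroupType) (G : {group gT}) (A : {set gT}) rho :
  abelian G -> 3 <= rho -> A \subset G -> diam_ge_fin G A rho ->
  (#|A| * rho.+1 <= 2 * #|G|)%N.
Proof.
move=> cGG r3 sAG [[r0 e] rmin].
have ex : exists r, sumset r A == G by exists r0; rewrite e.
case: (ex_minnP ex) => d /eqP SdG dmin'.
have dmin r : sumset r A = G -> d <= r by move=> e'; apply: dmin'; rewrite e'.
have rd : rho <= d := rmin _ SdG.
have d3 : 3 <= d by apply: leq_trans rd.
have bd := bound_d cGG sAG d3 SdG dmin.
apply: leq_trans bd; rewrite mulnC; apply: leq_mul; first by rewrite ltnS.
by apply: subset_leq_card; rewrite /A0 subsetUr.
Qed.

Theorem theorem2p9 (gT : finGroupType) (G : {group gT}) (rho : nat) :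
  abelian G -> 4 <= rho ->
  (s_rho G rho * rho.+1 <= 2 * #|G|)%N /\
  ((s_rho G rho * rho.+1 = 2 * #|G|)%N <->
     exists H : {group gT}, [/\ H \subset G, cyclic (G / H) & #|G / H| = rho.+1]) /\
  (forall A : {set gT}, A \subset G ->
     ([/\ <<A>> = G, (forall r, sumset r A = G -> rho <= r)
        & (#|A| * rho.+1 = 2 * #|G|)%N] <->
      exists (H : {group gT}) (g : gT),
        [/\ H \subset G, cyclic (G / H), #|G / H| = rho.+1,
            g \in G /\ <[coset H g]> = G / H & A = H :|: g *: H])).
Proof.
move=> cGG r4.
have r0 : 0 < rho by apply: leq_trans r4.
have r3 : 3 <= rho by apply: ltnW.
have part1 : (s_rho G rho * rho.+1 <= 2 * #|G|)%N.
  rewrite -leq_divRL //; apply/bigmax_leqP => A /andP[sAG pA].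
  rewrite leq_divRL //; exact: boundA cGG r3 sAG (pboolP pA).
have genS (A : {set gT}) r : A \subset G -> sumset r A = G -> <<A>> = G.
  move=> sAG e; apply/eqP; rewrite eqEsubset gen_subG sAG /= -{1}e.
  exact: sumset_gen.
split=> //; split.
  split.
    move=> e.
    have npos : 0 < #|G| := cardG_gt0 G.
    case: (pickP (fun A : {set gT} => (A \subset G) && pbool (diam_ge_fin G A rho))) =>
      [A0' PA0 | P0].
      move: e; rewrite /s_rho (bigmax_eq_arg A0' PA0).
      case: arg_maxnP => // A /andP[sAG pA] _ eA.
      have [[r e] rmin] := pboolP pA.
      have [H [g [sHG cyc cQ _ _]]] := i_to_ii cGG sAG r4 (genS _ _ sAG e) rmin eA.
      by exists H.
    move: e; rewrite /s_rho big_pred0 //; move: npos; clia.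
  case=> H [sHG /cyclicP[c ec] cQ].
  have : c \in G / H by rewrite ec cycle_id.
  case/morphimP => g gN gG ec'.
  have eQ : <[coset H g]> = G / H by rewrite ec /= -ec'.
  have [SG genA rmin eqA] := ii_to_i cGG r0 sHG cQ gG eQ.
  have PA : (H :|: g *: H \subset G) && pbool (diam_ge_fin G (H :|: g *: H) rho).
    apply/andP; split; first by rewrite -genA subset_gen.
    by apply: pboolT; split; [exists rho | ].
  have h : #|H :|: g *: H| <= s_rho G rho.
    by rewrite /s_rho; apply: (leq_bigmax_cond (H :|: g *: H) PA).
  apply/eqP; rewrite eqn_leq part1 /= -eqA; by rewrite leq_mul2r h orbT.
move=> A sAG; split.
  by case=> genA rmin eqA; apply: i_to_ii.
case=> H [g [sHG _ cQ [gG eQ] ->]].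
by have [_ genA rmin eqA] := ii_to_i cGG r0 sHG cQ gG eQ.
Qed.
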